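(* Let $x_L<x_R$, $\Delta x=x_R-x_L$, and let $\sigma_L,\sigma_R:[0,\infty)\to[0,\infty)$ be piecewise linear continuous functions. Define for $x\in[x_L,x_R]$, $y\ge0$, $$\sigma(x,y)=\frac{\sigma_R(y)(x-x_L)+\sigma_L(y)(x_R-x)}{\Delta x},\qquad B(x)=B_L+(B_R-B_L)\frac{x-x_L}{\Delta x},$$ with $B_L,B_R\in\mathbb R$. Let $W\in\mathbb R$ be a constant water-surface elevation and $h(x)=\max(W-B(x),0)$. Set $$A(x)=\int_0^{h(x)}\sigma(x,y)\,dy,\quad I_1(x)=\int_0^{h(x)}(h(x)-y)\sigma(x,y)\,dy,\quad I_2(x)=\int_0^{h(x)}(h(x)-y)\,\partial_x\sigma(x,y)\,dy.$$ Then $$I_1(x_R)-I_1(x_L)-\int_{x_L}^{x_R}I_2(x)\,dx+\int_{x_L}^{x_R}A(x)\,B'(x)\,dx=0.$$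
   Context: $I_1$ is the hydrostatic pressure force and $I_2$ the wall pressure force of a channel with cross-section width $\sigma(x,y)$ at longitudinal position $x$ and height $y$ above the bed $B(x)$; the cross-section is linearly interpolated in $x$ between two given piecewise-linear cross-sections at the cell ends. *)

(* Defs.v *)
From Stdlib Require Import Reals Lra List Sorted Classical ClassicalEpsilon.
Open Scope R_scope.

(* Total Riemann integral: RiemannInt if f is Riemann integrable on [a,b]
   (with Stdlib's orientation convention), 0 otherwise. *)
Definition RInt (f : R -> R) (a b : R) : R :=
  match excluded_middle_informative
          (exists pr : Riemann_integrable f a b, True) with
  | left H => RiemannInt (proj1_sig (constructive_indefinite_description _ H))
  | right _ => 0
  end.

(* f : [0,oo) -> R is piecewise linear (hence continuous): there are finitely
   many breakpoints 0 = y_0 < y_1 < ... < y_n such that f is affine on each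
   closed segment [y_i, y_{i+1}] and on [y_n, oo). Affinity on closed
   segments sharing endpoints gives continuity on [0,oo). *)
Definition piecewise_linear (f : R -> R) : Prop :=
  exists p : list R,
    Sorted Rlt (0 :: p) /\
    (forall i : nat, (i < length p)%nat ->
       exists a b : R, forall y, nth i (0 :: p) 0 <= y <= nth (S i) (0 :: p) 0 ->
                                 f y = a * y + b) /\
    (exists a b : R, forall y, last (0 :: p) 0 <= y -> f y = a * y + b).

(* continuity on [0,oo) (implied by the above, stated for explicitness) *)
Definition continuous_on_nonneg (f : R -> R) : Prop :=
  forall y, 0 <= y -> continuity_pt f y.

Definition sect_width (xL xR : R) (sL sR : R -> R) (x y : R) : R :=
  (sR y * (x - xL) + sL y * (xR - x)) / (xR - xL).

Definition bed (xL xR BL BR : R) (x : R) : R :=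
  BL + (BR - BL) * (x - xL) / (xR - xL).

(* Main.v *)
Require Import Defs.
From Stdlib Require Import Reals Lra ClassicalEpsilon.
Open Scope R_scope.
From Coquelicot Require Coquelicot.

Module Aux.
Import Coquelicot.Coquelicot.

Lemma bridge (f : R -> R) a b v : is_RInt f a b v -> Defs.RInt f a b = v.
Proof.
  intros H. unfold Defs.RInt.
  destruct excluded_middle_informative as [e|n].
  - destruct constructive_indefinite_description as [pr Hpr]; simpl.
    rewrite <- RInt_Reals. now apply is_RInt_unique.
  - exfalso; apply n. exists (ex_RInt_Reals_0 _ _ _ (ex_intro _ v H)). exact I.
Qed.

Ltac req := match goal with |- ?a = ?b => change (a = b :> R) end.

Definition m (u : R) := (u + Rabs u) / 2.

Lemma m_max u : Rmax u 0 = m u.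
Proof.
  unfold m, Rmax. destruct Rle_dec.
  - rewrite Rabs_left1 by lra. lra.
  - rewrite Rabs_pos_eq by lra. lra.
Qed.

Lemma m_pos u : 0 <= u -> m u = u.
Proof. intros; unfold m; rewrite Rabs_pos_eq by lra; lra. Qed.

Lemma m_neg u : u <= 0 -> m u = 0.
Proof. intros; unfold m; rewrite Rabs_left1 by lra; lra. Qed.

Lemma m_ge0 u : 0 <= m u.
Proof. destruct (Rle_dec 0 u). rewrite m_pos; lra. rewrite m_neg; lra. Qed.

Lemma m_cont u : continuous m u.
Proof.
  unfold m. apply (continuous_mult (fun u => u + Rabs u) (fun _ => /2)).
  apply (continuous_plus (fun u => u) Rabs). apply continuous_id. apply continuous_Rabs.
  apply continuous_const.
Qed.

Lemma comb (f g : R -> R) a b u v c d :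
  is_RInt f a b u -> is_RInt g a b v ->
  is_RInt (fun y => c * f y + d * g y) a b (c * u + d * v).
Proof.
  intros Hf Hg. exact (is_RInt_plus _ _ _ _ _ _ (is_RInt_scal _ _ _ c _ Hf) (is_RInt_scal _ _ _ d _ Hg)).
Qed.

Section S.
Variable s : R -> R.
Hypothesis hs : forall y, 0 <= y -> continuity_pt s y.

Definition se y := s (m y).

Lemma se_cont y : continuous se y.
Proof.
  unfold se. apply continuous_comp. apply m_cont.
  apply continuity_pt_filterlim. apply hs. apply m_ge0.
Qed.

Definition F0 u := RInt se 0 u.

Lemma F0_der u : is_derive F0 u (se u).
Proof.
  apply (is_derive_RInt se F0 0). apply filter_forall. intros b; cbv beta; unfold F0. apply (@RInt_correct R_CompleteNormedModule).
  apply ex_RInt_continuous. intros; apply se_cont. apply se_cont.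
Qed.

Lemma F0_cont u : continuous F0 u.
Proof. apply (@ex_derive_continuous R_AbsRing R_NormedModule). eexists; apply F0_der. Qed.

Lemma ys_cont y : continuous (fun y => y * se y) y.
Proof. apply (continuous_mult (fun y => y) se). apply continuous_id. apply se_cont. Qed.

Definition G u := RInt (fun y => y * se y) 0 u.

Lemma G_der u : is_derive G u (u * se u).
Proof.
  apply (is_derive_RInt (fun y => y * se y) G 0). apply filter_forall. intros b; cbv beta; unfold G. apply (@RInt_correct R_CompleteNormedModule).
  apply ex_RInt_continuous. intros; apply ys_cont. apply ys_cont.
Qed.

Definition P u := u * F0 u - G u.

Lemma P_der u : is_derive P u (F0 u).
Proof.
  unfold P. auto_derive.
  - split. eexists; apply F0_der. split. eexists; apply G_der. exact I.
  - change (fun x : R => F0 x) with F0; change (fun x : R => G x) with G.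
    rewrite (is_derive_unique _ _ _ (F0_der u)), (is_derive_unique _ _ _ (G_der u)). ring.
Qed.

Definition m0 t := F0 (m t).
Definition H u := RInt m0 0 u.

Lemma m0_cont t : continuous m0 t.
Proof. unfold m0. apply continuous_comp. apply m_cont. apply F0_cont. Qed.

Lemma H_der u : is_derive H u (m0 u).
Proof.
  apply (is_derive_RInt m0 H 0). apply filter_forall. intros b; cbv beta; unfold H. apply (@RInt_correct R_CompleteNormedModule).
  apply ex_RInt_continuous. intros; apply m0_cont. apply m0_cont.
Qed.

Lemma H_cont u : continuous H u.
Proof. apply (@ex_derive_continuous R_AbsRing R_NormedModule). eexists; apply H_der. Qed.

Lemma P0 : P 0 = 0.
Proof. unfold P, G. rewrite RInt_point. unfold zero; simpl. ring. Qed.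

Lemma H_P h : 0 <= h -> H h = P h.
Proof.
  intros Hh. unfold H. apply is_RInt_unique.
  replace (P h) with (minus (P h) (P 0)) by (rewrite P0; unfold minus, plus, opp; simpl; ring).
  apply (@is_RInt_ext R_NormedModule F0).
  - intros x Hx. rewrite Rmin_left in Hx by lra. unfold m0. rewrite m_pos; lra.
  - apply (@is_RInt_derive R_CompleteNormedModule). intros; apply P_der. intros; apply F0_cont.
Qed.

Lemma H_neg u : u <= 0 -> H u = 0.
Proof.
  intros Hu. unfold H. apply is_RInt_unique.
  replace 0 with (scal (u - 0) 0) at 2 by (unfold scal; simpl; unfold mult; simpl; ring).
  apply (@is_RInt_ext R_NormedModule (fun _ => 0)).
  - intros x Hx. rewrite Rmax_left in Hx by lra. unfold m0. rewrite m_neg by lra.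
    unfold F0. rewrite RInt_point. reflexivity.
  - apply (@is_RInt_const R_NormedModule).
Qed.

Lemma H_m u : H u = H (m u).
Proof.
  destruct (Rle_dec 0 u). rewrite m_pos; auto.
  rewrite m_neg by lra. rewrite !H_neg; lra.
Qed.

Lemma K h : 0 <= h -> is_RInt (fun y => (h - y) * s y) 0 h (H h).
Proof.
  intros Hh. rewrite H_P by auto.
  apply (@is_RInt_ext R_NormedModule (fun y => h * se y + (-1) * (y * se y))).
  - intros x Hx. rewrite Rmin_left in Hx by lra. unfold se. rewrite m_pos by lra. req; ring.
  - unfold P. replace (h * F0 h - G h) with (h * F0 h + (-1) * G h) by ring.
    apply comb; [unfold F0|unfold G]; apply (@RInt_correct R_CompleteNormedModule); apply ex_RInt_continuous; intros.
    apply se_cont. apply ys_cont.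
Qed.

Lemma K0 h : 0 <= h -> is_RInt s 0 h (F0 h).
Proof.
  intros Hh. apply (@is_RInt_ext R_NormedModule se).
  - intros x Hx. rewrite Rmin_left in Hx by lra. unfold se. rewrite m_pos by lra. try reflexivity.
  - unfold F0; apply (@RInt_correct R_CompleteNormedModule); apply ex_RInt_continuous; intros. apply se_cont.
Qed.

End S.

Lemma pack (F f g : R -> R) a b u v c d w :
  a <= b -> is_RInt f a b u -> is_RInt g a b v ->
  (forall y, a < y < b -> F y = c * f y + d * g y) -> w = c * u + d * v ->
  Defs.RInt F a b = w.
Proof.
  intros hab hf hg hF hw. apply bridge. rewrite hw.
  apply (@is_RInt_ext R_NormedModule (fun y => c * f y + d * g y)).
  - intros y Hy. rewrite Rmin_left, Rmax_right in Hy by lra. symmetry. apply hF; auto.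
  - apply comb; auto.
Qed.

Lemma sw_der xL xR sL sR y x : xL < xR ->
  derivable_pt_lim (fun t => sect_width xL xR sL sR t y) x ((sR y - sL y)/(xR-xL)).
Proof.
  intros hx. apply is_derive_Reals. unfold sect_width. auto_derive; [ try exact I; try (apply Rgt_not_eq; lra) | ].
  req; field. apply Rgt_not_eq; lra.
Qed.

Lemma bed_der xL xR BL BR x : xL < xR ->
  derivable_pt_lim (bed xL xR BL BR) x ((BR-BL)/(xR-xL)).
Proof.
  intros hx. apply is_derive_Reals. unfold bed. auto_derive; [ try exact I; try (apply Rgt_not_eq; lra) | ].
  req; field. apply Rgt_not_eq; lra.
Qed.

Lemma comb_der xL xR (u v : R -> R) x du dv :
  xL < xR -> is_derive u x du -> is_derive v x dv ->
  is_derive (fun t => ((t-xL)*u t + (xR-t)*v t)/(xR-xL)) x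
    ((u x - v x + (x-xL)*du + (xR-x)*dv)/(xR-xL)).
Proof.
  intros hx hu hv. auto_derive.
  - split. eexists; exact hu. split. eexists; exact hv. exact I.
  - change (fun x : R => u x) with u; change (fun x : R => v x) with v.
    rewrite (is_derive_unique _ _ _ hu), (is_derive_unique _ _ _ hv). req; field. apply Rgt_not_eq; lra.
Qed.

Lemma is_derive_eq (f : R -> R) x l l' : is_derive f x l -> l = l' -> is_derive f x l'.
Proof. intros; subst; auto. Qed.

Lemma g_cont xL xR BL BR W x : xL < xR -> continuous (fun x => W - bed xL xR BL BR x) x.
Proof.
  intros hx. apply (@ex_derive_continuous R_AbsRing R_NormedModule).
  unfold bed. auto_derive. try exact I; try (apply Rgt_not_eq; lra).
Qed.

Lemma cont_I2 (a b : R -> R) D x : continuous a x -> continuous b x ->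
  continuous (fun x => (a x - b x) / D) x.
Proof.
  intros ha hb. apply (continuous_mult (fun x => a x - b x) (fun _ => /D)).
  apply (continuous_minus a b); auto. apply continuous_const.
Qed.

Lemma cont_A (c d : R -> R) xL xR D k x : continuous c x -> continuous d x ->
  continuous (fun x => ((x-xL)*c x + (xR-x)*d x)/D * k) x.
Proof.
  intros hc hd. apply (continuous_mult (fun x => ((x-xL)*c x + (xR-x)*d x)/D) (fun _ => k)).
  2: apply continuous_const.
  apply (continuous_mult (fun x => ((x-xL)*c x + (xR-x)*d x)) (fun _ => /D)).
  2: apply continuous_const.
  apply (continuous_plus (fun x => (x-xL)*c x) (fun x => (xR-x)*d x)).
  - apply (continuous_mult (fun x => x-xL) c); auto.
    apply (continuous_minus (fun x => x) (fun _ => xL)). apply continuous_id. apply continuous_const.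
  - apply (continuous_mult (fun x => xR-x) d); auto.
    apply (continuous_minus (fun _ => xR) (fun x => x)). apply continuous_const. apply continuous_id.
Qed.


Theorem main_aux
  (xL xR : R) (sL sR : R -> R) (BL BR W : R)
  (dsigma : R -> R -> R) (dB : R -> R)
  (hx : xL < xR)
  (hsL : piecewise_linear sL) (hsR : piecewise_linear sR)
  (hsLc : continuous_on_nonneg sL) (hsRc : continuous_on_nonneg sR)
  (hsLp : forall y, 0 <= y -> 0 <= sL y) (hsRp : forall y, 0 <= y -> 0 <= sR y)
  (hdsigma : forall x y, xL <= x <= xR -> 0 <= y ->
     derivable_pt_lim (fun t => sect_width xL xR sL sR t y) x (dsigma x y))
  (hdB : forall x, xL <= x <= xR ->
     derivable_pt_lim (bed xL xR BL BR) x (dB x)) :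
  let h := fun x => Rmax (W - bed xL xR BL BR x) 0 in
  let A := fun x => Defs.RInt (fun y => sect_width xL xR sL sR x y) 0 (h x) in
  let I1 := fun x => Defs.RInt (fun y => (h x - y) * sect_width xL xR sL sR x y) 0 (h x) in
  let I2 := fun x => Defs.RInt (fun y => (h x - y) * dsigma x y) 0 (h x) in
  I1 xR - I1 xL - Defs.RInt I2 xL xR + Defs.RInt (fun x => A x * dB x) xL xR = 0.
Proof.
  intros h A I1 I2.
  set (D := xR - xL).
  assert (HD : D <> 0) by (unfold D; apply Rgt_not_eq; lra).
  assert (dsv : forall x y, xL <= x <= xR -> 0 <= y -> dsigma x y = (sR y - sL y)/D).
  { intros x y Hx Hy. eapply uniqueness_limite. apply hdsigma; auto. apply sw_der; auto. }
  assert (dBv : forall x, xL <= x <= xR -> dB x = (BR - BL)/D).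
  { intros x Hx. eapply uniqueness_limite. apply hdB; auto. apply bed_der; auto. }
  set (g := fun x => W - bed xL xR BL BR x).
  set (q := fun x => m (g x)).
  assert (hq : forall x, h x = q x) by (intros; unfold h, q, g; apply m_max).
  assert (q0 : forall x, 0 <= q x) by (intros; apply m_ge0).
  set (I2ex := fun x => (H sR (q x) - H sL (q x)) / D).
  set (ADB := fun x => ((x-xL)*F0 sR (q x) + (xR-x)*F0 sL (q x))/D * ((BR-BL)/D)).
  set (Phi := fun x => ((x-xL)*H sR (g x) + (xR-x)*H sL (g x))/D).
  assert (Aeq : forall x, A x = ((x-xL)*F0 sR (q x) + (xR-x)*F0 sL (q x))/D).
  { intros x. unfold A. rewrite hq.
    eapply (pack _ sR sL _ _ _ _ ((x-xL)/D) ((xR-x)/D)).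
    - apply q0.
    - apply K0; auto.
    - apply K0; auto.
    - intros y Hy. unfold sect_width. fold D. field. auto.
    - field. auto. }
  assert (I1eq : forall x, I1 x = ((x-xL)*H sR (q x) + (xR-x)*H sL (q x))/D).
  { intros x. unfold I1. rewrite hq.
    eapply (pack _ (fun y => (q x - y) * sR y) (fun y => (q x - y) * sL y) _ _ _ _ ((x-xL)/D) ((xR-x)/D)).
    - apply q0.
    - apply K; auto.
    - apply K; auto.
    - intros y Hy. unfold sect_width. fold D. field. auto.
    - field. auto. }
  assert (I2eq : forall x, xL <= x <= xR -> I2 x = I2ex x).
  { intros x Hx. unfold I2, I2ex. rewrite hq.
    eapply (pack _ (fun y => (q x - y) * sR y) (fun y => (q x - y) * sL y) _ _ _ _ (1/D) (-1/D)).
    - apply q0.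
    - apply K; auto.
    - apply K; auto.
    - intros y Hy. rewrite dsv by lra. field. auto.
    - field. auto. }
  assert (qc : forall x, continuous q x).
  { intros x. unfold q. apply continuous_comp. apply g_cont; auto. apply m_cont. }
  assert (I2c : forall x, continuous I2ex x).
  { intros x. unfold I2ex. apply (cont_I2 (fun x => H sR (q x)) (fun x => H sL (q x))).
    apply continuous_comp; auto. apply H_cont; auto.
    apply continuous_comp; auto. apply H_cont; auto. }
  assert (ADBc : forall x, continuous ADB x).
  { intros x. unfold ADB. apply (cont_A (fun x => F0 sR (q x)) (fun x => F0 sL (q x))).
    apply continuous_comp; auto. apply F0_cont; auto.
    apply continuous_comp; auto. apply F0_cont; auto. }
  assert (gd : forall x, is_derive g x (-(BR-BL)/D)).
  { intros x. unfold g, bed. auto_derive; [ try exact I; try (unfold D in HD; exact HD) | ]. unfold D in *. req; field. exact HD. }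
  assert (Hgd : forall s x, continuous_on_nonneg s -> is_derive (fun t => H s (g t)) x ((-(BR-BL)/D) * F0 s (q x))).
  { intros s x hs. eapply is_derive_eq. apply (is_derive_comp (H s) g x). apply H_der. exact hs. apply gd. reflexivity. }
  assert (Phid : forall x, is_derive Phi x (I2ex x - ADB x)).
  { intros x. unfold Phi.
    eapply is_derive_eq.
    - apply (comb_der xL xR (fun t => H sR (g t)) (fun t => H sL (g t))); auto.
    - unfold I2ex, ADB. rewrite (H_m sR (g x)), (H_m sL (g x)). fold (q x).
      req. fold D. field. exact HD. }
  assert (HE : is_RInt (fun x => I2ex x - ADB x) xL xR (Phi xR - Phi xL)).
  { apply (@is_RInt_derive R_CompleteNormedModule Phi).
    intros; apply Phid. intros; apply (continuous_minus I2ex ADB); auto. }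
  assert (R1 : Defs.RInt I2 xL xR = RInt I2ex xL xR).
  { apply bridge. apply (@is_RInt_ext R_NormedModule I2ex).
    - intros y Hy. rewrite Rmin_left, Rmax_right in Hy by lra. symmetry; apply I2eq; lra.
    - apply (@RInt_correct R_CompleteNormedModule). apply ex_RInt_continuous; auto. }
  assert (R2 : Defs.RInt (fun x => A x * dB x) xL xR = RInt ADB xL xR).
  { apply bridge. apply (@is_RInt_ext R_NormedModule ADB).
    - intros y Hy. rewrite Rmin_left, Rmax_right in Hy by lra. rewrite Aeq, dBv by lra. reflexivity.
    - apply (@RInt_correct R_CompleteNormedModule). apply ex_RInt_continuous; auto. }
  assert (R3 : RInt I2ex xL xR - RInt ADB xL xR = Phi xR - Phi xL).
  { apply (@is_RInt_unique R_CompleteNormedModule) in HE. rewrite <- HE. symmetry. apply (@is_RInt_unique R_CompleteNormedModule).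
    apply (@is_RInt_minus R_NormedModule I2ex ADB);
      apply (@RInt_correct R_CompleteNormedModule); apply ex_RInt_continuous; auto. }
  rewrite R1, R2, !I1eq.
  assert (Pq : forall x, Phi x = ((x-xL)*H sR (q x) + (xR-x)*H sL (q x))/D).
  { intros x. unfold Phi, q. rewrite (H_m sR (g x)), (H_m sL (g x)). reflexivity. }
  rewrite <- !Pq. lra.
Qed.

End Aux.


Theorem mainTheorem2
  (xL xR : R) (sL sR : R -> R) (BL BR W : R)
  (dsigma : R -> R -> R) (dB : R -> R)
  (hx : xL < xR)
  (hsL : piecewise_linear sL) (hsR : piecewise_linear sR)
  (hsLc : continuous_on_nonneg sL) (hsRc : continuous_on_nonneg sR)
  (hsLp : forall y, 0 <= y -> 0 <= sL y) (hsRp : forall y, 0 <= y -> 0 <= sR y)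
  (hdsigma : forall x y, xL <= x <= xR -> 0 <= y ->
     derivable_pt_lim (fun t => sect_width xL xR sL sR t y) x (dsigma x y))
  (hdB : forall x, xL <= x <= xR ->
     derivable_pt_lim (bed xL xR BL BR) x (dB x)) :
  let h := fun x => Rmax (W - bed xL xR BL BR x) 0 in
  let A := fun x => RInt (fun y => sect_width xL xR sL sR x y) 0 (h x) in
  let I1 := fun x => RInt (fun y => (h x - y) * sect_width xL xR sL sR x y) 0 (h x) in
  let I2 := fun x => RInt (fun y => (h x - y) * dsigma x y) 0 (h x) in
  I1 xR - I1 xL - RInt I2 xL xR + RInt (fun x => A x * dB x) xL xR = 0.
Proof.
  exact (Aux.main_aux xL xR sL sR BL BR W dsigma dB hx hsL hsR hsLc hsRc hsLp hsRp hdsigma hdB).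
Qed.
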